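(* Let $l,u,\hbar$ satisfy the standing assumptions below. (i) If $S\in C^1_G(0,T)$, then the mappings $t\mapsto L_t(S_t)$ and $t\mapsto U_t(S_t)$ are continuous. In particular, $t\mapsto L_t(0)$ and $t\mapsto U_t(0)$ are continuous and bounded. (ii) If $t\in[0,T]$ and $X,X'\in L^1_G(\Omega_t)$, then $|L_t(X)-L_t(X')|\le\frac{2\overline{c}}{\underline{c}}\hat{\mathbb{E}}[|X-X'|]$ and $|U_t(X)-U_t(X')|\le\frac{2\overline{c}}{\underline{c}}\hat{\mathbb{E}}[|X-X'|]$.
   Context: Setting: $\hat{\mathbb{E}}$ is the $G$-expectation on $\Omega_T=\{\omega\in C([0,T];\mathbb{R}^d):\omega_0=0\}$; $L^1_G(\Omega_t)$ the completion of bounded Lipschitz cylinder functionals of the canonical process up to time $t$ under $\hat{\mathbb{E}}|\cdot|$; $C^1_G(0,T)$ the set of processes $S$ with $S_v\in L^1_G(\Omega_v)$ for all $v$ and $v\mapsto S_v$ continuous in $\hat{\mathbb{E}}|\cdot|$. Standing assumptions: $l,u:[0,T]\to\mathbb{R}$ bounded continuous with $\inf_t(u_t-l_t)>0$; $\hbar:[0,T]\times\Omega_T\times\mathbb{R}\to\mathbb{R}$ with $(t,y)\mapsto\hbar(t,y)$ uniformly continuous uniformly in $\omega$, $y\mapsto\hbar(t,y)$ strictly increasing, $\hbar(t,y)\in L^1_G(\Omega_T)$, $\hat{\mathbb{E}}[\lim_{y\downarrow-\infty}\hbar(t,y)]<\inf_sl_s<\sup_su_s<\hat{\mathbb{E}}[\lim_{y\uparrow\infty}\hbar(t,y)]$,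 $|\hbar(t,y)|\le C_\hbar(1+|y|)$, and $\underline{c}|y-y'|\le|\hbar(t,y)-\hbar(t,y')|\le\overline{c}|y-y'|$ with constants $C_\hbar>0$, $0<\underline{c}\le\overline{c}$. For $X\in L^1_G(\Omega_t)$, $\overline{H}(t,x,X):=\hat{\mathbb{E}}[\hbar(t,x+X-\hat{\mathbb{E}}[X])]$, $x\in\mathbb{R}$ (continuous, strictly increasing, with limits $\mp\infty$ at $\mp\infty$); $L_t(X):=\overline{H}^{-1}(t,\cdot,X)(l_t)$ and $U_t(X):=\overline{H}^{-1}(t,\cdot,X)(u_t)$. *)

(* Defs.v *)
From Stdlib Require Import Reals Lra ClassicalEpsilon.
Open Scope R_scope.

(* Abstract sublinear-expectation framework modelling the G-expectation
   setting.
   - [Om]      : the path space Omega_T (canonical process abstracted away)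
   - [Lsp t X] : "X belongs to L^1_G(Omega_t)"  (random variables are
                 represented by omega-wise functions Om -> R)
   - [E X]     : the (G-)expectation  \hat{E}[X]                          *)
Definition G_framework (Om : Type) (T : R)
  (Lsp : R -> (Om -> R) -> Prop) (E : (Om -> R) -> R) : Prop :=
  (forall s t X, 0 <= s -> s <= t -> t <= T -> Lsp s X -> Lsp t X) /\
  (forall t, 0 <= t <= T ->
     (forall c : R, Lsp t (fun _ => c)) /\
     (forall X Y, Lsp t X -> Lsp t Y -> Lsp t (fun w => X w + Y w)) /\
     (forall (a : R) X, Lsp t X -> Lsp t (fun w => a * X w)) /\
     (forall X, Lsp t X -> Lsp t (fun w => Rabs (X w)))) /\
  (forall (h : Om -> R -> R) (K : R) (Y : Om -> R),
     (forall y, Lsp T (fun w => h w y)) ->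
     (forall w y y', Rabs (h w y - h w y') <= K * Rabs (y - y')) ->
     Lsp T Y -> Lsp T (fun w => h w (Y w))) /\
  (forall X Y, Lsp T X -> Lsp T Y -> (forall w, X w <= Y w) -> E X <= E Y) /\
  (forall c : R, E (fun _ => c) = c) /\
  (forall X Y, Lsp T X -> Lsp T Y -> E (fun w => X w + Y w) <= E X + E Y) /\
  (forall (a : R) X, 0 <= a -> Lsp T X -> E (fun w => a * X w) = a * E X).

Definition cont_on_0T (T : R) (f : R -> R) : Prop :=
  forall t, 0 <= t <= T -> forall eps, 0 < eps ->
    exists delta, 0 < delta /\
      forall s, 0 <= s <= T -> Rabs (s - t) < delta -> Rabs (f s - f t) < eps.

Definition bounded_on_0T (T : R) (f : R -> R) : Prop :=
  exists M, forall t, 0 <= t <= T -> Rabs (f t) <= M.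

Definition C1G {Om : Type} (T : R) (Lsp : R -> (Om -> R) -> Prop)
  (E : (Om -> R) -> R) (S : R -> Om -> R) : Prop :=
  (forall v, 0 <= v <= T -> Lsp v (S v)) /\
  (forall v, 0 <= v <= T -> forall eps, 0 < eps ->
     exists delta, 0 < delta /\
       forall w, 0 <= w <= T -> Rabs (w - v) < delta ->
         E (fun om => Rabs (S w om - S v om)) < eps).

Definition Hbar {Om : Type} (E : (Om -> R) -> R) (hbar : R -> Om -> R -> R)
  (t x : R) (X : Om -> R) : R :=
  E (fun w => hbar t w (x + X w - E X)).

Definition Hbar_inv {Om : Type} (E : (Om -> R) -> R) (hbar : R -> Om -> R -> R)
  (t : R) (X : Om -> R) (a : R) : R :=
  epsilon (inhabits 0) (fun x => Hbar E hbar t x X = a).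

Definition Lop {Om : Type} (E : (Om -> R) -> R) (hbar : R -> Om -> R -> R)
  (l : R -> R) (t : R) (X : Om -> R) : R := Hbar_inv E hbar t X (l t).

Definition Uop {Om : Type} (E : (Om -> R) -> R) (hbar : R -> Om -> R -> R)
  (u : R -> R) (t : R) (X : Om -> R) : R := Hbar_inv E hbar t X (u t).

(* Main.v *)
Require Import Defs.
From Stdlib Require Import Reals Lra ClassicalEpsilon FunctionalExtensionality.
Open Scope R_scope.


Lemma P_ext {Om : Type} (P : (Om -> R) -> Prop) (X Y : Om -> R) :
  (forall w, X w = Y w) -> P X -> P Y.
Proof. intros H HX. replace Y with X; [exact HX|]. apply functional_extensionality; exact H. Qed.

Section S.
Context {Om : Type} (T : R) (Lsp : R -> (Om -> R) -> Prop) (E : (Om -> R) -> R).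
Context (HG : G_framework Om T Lsp E) (HT : 0 <= T).

Lemma LT_c c : Lsp T (fun _ => c).
Proof. destruct HG as [_ [Hv _]]. destruct (Hv T (conj HT (Rle_refl T))) as [H _]. apply H. Qed.
Lemma LT_add X Y : Lsp T X -> Lsp T Y -> Lsp T (fun w => X w + Y w).
Proof. destruct HG as [_ [Hv _]]. destruct (Hv T (conj HT (Rle_refl T))) as [_ [H _]]. apply H. Qed.
Lemma LT_scal a X : Lsp T X -> Lsp T (fun w => a * X w).
Proof. destruct HG as [_ [Hv _]]. destruct (Hv T (conj HT (Rle_refl T))) as [_ [_ [H _]]]. apply H. Qed.
Lemma LT_abs X : Lsp T X -> Lsp T (fun w => Rabs (X w)).
Proof. destruct HG as [_ [Hv _]]. destruct (Hv T (conj HT (Rle_refl T))) as [_ [_ [_ H]]]. apply H. Qed.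
Lemma LT_sub X Y : Lsp T X -> Lsp T Y -> Lsp T (fun w => X w - Y w).
Proof. intros HX HY. apply (P_ext _ (fun w => X w + (-1) * Y w)); [intro; ring|].
  apply LT_add; [exact HX| apply LT_scal; exact HY]. Qed.
Lemma Emono X Y : Lsp T X -> Lsp T Y -> (forall w, X w <= Y w) -> E X <= E Y.
Proof. destruct HG as [_ [_ [_ [H _]]]]. apply H. Qed.
Lemma Ecst c : E (fun _ => c) = c.
Proof. destruct HG as [_ [_ [_ [_ [H _]]]]]. apply H. Qed.
Lemma Esub X Y : Lsp T X -> Lsp T Y -> E (fun w => X w + Y w) <= E X + E Y.
Proof. destruct HG as [_ [_ [_ [_ [_ [H _]]]]]]. apply H. Qed.
Lemma Ehom a X : 0 <= a -> Lsp T X -> E (fun w => a * X w) = a * E X.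
Proof. destruct HG as [_ [_ [_ [_ [_ [_ H]]]]]]. apply H. Qed.

Lemma Etransl B c : Lsp T B -> E (fun w => B w + c) = E B + c.
Proof. intros HB. apply Rle_antisym.
  - pose proof (Esub B (fun _ => c) HB (LT_c c)) as H. cbv beta in H. rewrite Ecst in H. exact H.
  - assert (H1 : E B <= E (fun w => (B w + c) + (-c))).
    { apply Emono; [exact HB| apply LT_add; [apply LT_add; [exact HB| apply LT_c]| apply LT_c]|].
      intro; lra. }
    pose proof (Esub (fun w => B w + c) (fun _ => -c) (LT_add _ _ HB (LT_c c)) (LT_c (-c))) as H2.
    cbv beta in H2. rewrite Ecst in H2. lra.
Qed.

Lemma Eabsdiff A B : Lsp T A -> Lsp T B -> Rabs (E A - E B) <= E (fun w => Rabs (A w - B w)).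
Proof. intros HA HB.
  assert (Hd : Lsp T (fun w => Rabs (A w - B w))) by (apply LT_abs, LT_sub; assumption).
  assert (H1 : E A <= E (fun w => B w + Rabs (A w - B w))).
  { apply Emono; [exact HA| apply LT_add; assumption|]. intro w. unfold Rabs; destruct Rcase_abs; lra. }
  assert (H2 : E B <= E (fun w => A w + Rabs (A w - B w))).
  { apply Emono; [exact HB| apply LT_add; assumption|]. intro w. unfold Rabs; destruct Rcase_abs; lra. }
  pose proof (Esub _ _ HB Hd). pose proof (Esub _ _ HA Hd).
  unfold Rabs at 1; destruct Rcase_abs; lra.
Qed.

Context (hbar : R -> Om -> R -> R) (c_lo c_hi : R) (Hclo : 0 < c_lo) (Hchi : c_lo <= c_hi).

Definition hh t :=
 (forall w y y', y < y' -> hbar t w y < hbar t w y') /\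
 (forall w y y', c_lo * Rabs (y - y') <= Rabs (hbar t w y - hbar t w y') /\
                 Rabs (hbar t w y - hbar t w y') <= c_hi * Rabs (y - y')) /\
 (forall y, Lsp T (fun w => hbar t w y)).

Lemma L_integrand t x Y : hh t -> Lsp T Y -> Lsp T (fun w => hbar t w (x + Y w - E Y)).
Proof. intros [_ [Hbl HL]] HY. destruct HG as [_ [_ [Hlip _]]].
  apply (Hlip (hbar t) c_hi (fun w => x + Y w - E Y)).
  - exact HL.
  - intros w y y'. apply Hbl.
  - apply (P_ext _ (fun w => (x + Y w) + (- E Y))); [intro; ring|].
    apply LT_add; [apply (P_ext _ (fun w => (fun _ => x) w + Y w)); [intro; reflexivity|]; apply LT_add; [apply LT_c|exact HY]|apply LT_c].
Qed.

Lemma pw t w y y' : hh t -> y <= y' ->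
  c_lo * (y' - y) <= hbar t w y' - hbar t w y <= c_hi * (y' - y).
Proof. intros [Hm [Hbl _]] H. destruct (Rle_lt_or_eq_dec _ _ H) as [Hl|He].
  - destruct (Hbl w y' y) as [A B]. specialize (Hm w y y' Hl).
    rewrite (Rabs_pos_eq (y' - y)) in A, B by lra.
    rewrite (Rabs_pos_eq (hbar t w y' - hbar t w y)) in A, B by lra. lra.
  - subst. replace (y' - y') with 0 by ring. lra.
Qed.

Lemma HB_mono t Y x x' : hh t -> Lsp T Y -> x <= x' ->
  c_lo * (x' - x) <= Hbar E hbar t x' Y - Hbar E hbar t x Y <= c_hi * (x' - x).
Proof. intros Hh HY Hx. unfold Hbar.
  assert (HA := L_integrand t x Y Hh HY). assert (HA' := L_integrand t x' Y Hh HY).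
  split.
  - pose proof (Etransl _ (c_lo * (x' - x)) HA).
    cut (E (fun w => hbar t w (x + Y w - E Y) + c_lo * (x' - x)) <= E (fun w => hbar t w (x' + Y w - E Y))); [lra|].
    apply Emono; [apply LT_add; [exact HA|apply LT_c]|exact HA'|].
    intro w. destruct (pw t w (x + Y w - E Y) (x' + Y w - E Y) Hh) as [A _]; [lra|].
    replace (x' + Y w - E Y - (x + Y w - E Y)) with (x' - x) in A by ring. lra.
  - pose proof (Etransl _ (c_hi * (x' - x)) HA).
    cut (E (fun w => hbar t w (x' + Y w - E Y)) <= E (fun w => hbar t w (x + Y w - E Y) + c_hi * (x' - x))); [lra|].
    apply Emono; [exact HA'|apply LT_add; [exact HA|apply LT_c]|].
    intro w. destruct (pw t w (x + Y w - E Y) (x' + Y w - E Y) Hh) as [_ A]; [lra|].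
    replace (x' + Y w - E Y - (x + Y w - E Y)) with (x' - x) in A by ring. lra.
Qed.

Lemma HB_lip t Y x x' : hh t -> Lsp T Y ->
  c_lo * Rabs (x - x') <= Rabs (Hbar E hbar t x Y - Hbar E hbar t x' Y) /\
  Rabs (Hbar E hbar t x Y - Hbar E hbar t x' Y) <= c_hi * Rabs (x - x').
Proof. intros Hh HY. destruct (Rle_dec x x') as [H|H].
  - pose proof (HB_mono t Y x x' Hh HY H).
    rewrite (Rabs_minus_sym x x'), (Rabs_minus_sym (Hbar E hbar t x Y)).
    rewrite !Rabs_pos_eq by nra. lra.
  - pose proof (HB_mono t Y x' x Hh HY ltac:(lra)).
    rewrite !Rabs_pos_eq by nra. lra.
Qed.

Lemma HB_exists t Y a : hh t -> Lsp T Y -> exists x, Hbar E hbar t x Y = a.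
Proof. intros Hh HY.
  set (F := fun x => Hbar E hbar t x Y).
  set (m := (Rabs (a - F 0) + 1) / c_lo).
  assert (Hm : c_lo * m = Rabs (a - F 0) + 1) by (unfold m; field; lra).
  assert (Hm0 : 0 < m) by (unfold m; apply Rdiv_lt_0_compat; [pose proof (Rabs_pos (a - F 0)); lra| lra]).
  assert (Hc : continuity (fun x => F x - a)).
  { intro x0. unfold continuity_pt, continue_in, limit1_in, limit_in. intros eps Heps.
    exists (eps / c_hi). split; [apply Rdiv_lt_0_compat; lra|].
    intros x [_ Hd]. simpl in *. unfold R_dist in *.
    destruct (HB_lip t Y x x0 Hh HY) as [_ B]. 
    replace (F x - a - (F x0 - a)) with (F x - F x0) by ring. unfold F.
    apply Rmult_lt_compat_l with (r := c_hi) in Hd; [|lra].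
    replace (c_hi * (eps / c_hi)) with eps in Hd by (field; lra). lra. }
  destruct (IVT (fun x => F x - a) (-m) m Hc ltac:(lra)) as [z [_ Hz]].
  - pose proof (HB_mono t Y (-m) 0 Hh HY ltac:(lra)). 
    pose proof (Rle_abs (- (a - F 0))). rewrite Rabs_Ropp in H0. cbv beta; unfold F in *. lra.
  - pose proof (HB_mono t Y 0 m Hh HY ltac:(lra)). 
    pose proof (Rle_abs (a - F 0)). cbv beta; unfold F in *. lra.
  - exists z. unfold F in Hz. lra.
Qed.

Lemma Hinv_spec t Y a : hh t -> Lsp T Y -> Hbar E hbar t (Hbar_inv E hbar t Y a) Y = a.
Proof. intros Hh HY. unfold Hbar_inv.
  apply (epsilon_spec (inhabits 0) (fun x => Hbar E hbar t x Y = a)).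
  apply HB_exists; assumption. Qed.

Lemma HB_Y t x Y Y' : hh t -> Lsp T Y -> Lsp T Y' ->
  Rabs (Hbar E hbar t x Y' - Hbar E hbar t x Y) <= 2 * c_hi * E (fun w => Rabs (Y w - Y' w)).
Proof. intros Hh HY HY'. unfold Hbar.
  assert (HA := L_integrand t x Y Hh HY). assert (HA' := L_integrand t x Y' Hh HY').
  assert (HD : Lsp T (fun w => Rabs (Y w - Y' w))) by (apply LT_abs, LT_sub; assumption).
  set (D := E (fun w => Rabs (Y w - Y' w))).
  assert (HED : Rabs (E Y - E Y') <= D) by (apply Eabsdiff; assumption).
  eapply Rle_trans; [apply Eabsdiff; assumption|].
  eapply Rle_trans with (E (fun w => c_hi * Rabs (Y w - Y' w) + c_hi * D)).
  - apply Emono.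
    + apply LT_abs, LT_sub; assumption.
    + apply LT_add; [apply LT_scal; exact HD| apply LT_c].
    + intro w. destruct Hh as [_ [Hbl _]].
      destruct (Hbl w (x + Y' w - E Y') (x + Y w - E Y)) as [_ B].
      eapply Rle_trans; [exact B|].
      rewrite <- Rmult_plus_distr_l. apply Rmult_le_compat_l; [lra|].
      revert HED. unfold Rabs; repeat destruct Rcase_abs; lra.
  - rewrite (Etransl _ _ (LT_scal c_hi _ HD)). rewrite Ehom by (lra || exact HD).
    fold D. lra.
Qed.

Lemma core_ii t a Y Y' : hh t -> Lsp T Y -> Lsp T Y' ->
  c_lo * Rabs (Hbar_inv E hbar t Y a - Hbar_inv E hbar t Y' a)
    <= 2 * c_hi * E (fun w => Rabs (Y w - Y' w)).
Proof. intros Hh HY HY'.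
  set (x := Hbar_inv E hbar t Y a). set (x' := Hbar_inv E hbar t Y' a).
  destruct (HB_lip t Y' x x' Hh HY') as [A _].
  assert (E1 : Hbar E hbar t x' Y' = a) by (apply Hinv_spec; assumption).
  assert (E2 : Hbar E hbar t x Y = a) by (apply Hinv_spec; assumption).
  rewrite E1, <- E2 in A. pose proof (HB_Y t x Y Y' Hh HY HY'). lra.
Qed.

Lemma core_t t s a b Y e : hh t -> hh s -> Lsp T Y ->
  (forall w y, Rabs (hbar t w y - hbar s w y) <= e) ->
  c_lo * Rabs (Hbar_inv E hbar t Y a - Hbar_inv E hbar s Y b) <= e + Rabs (a - b).
Proof. intros Ht Hs HY He.
  set (x' := Hbar_inv E hbar t Y a). set (x := Hbar_inv E hbar s Y b).
  destruct (HB_lip t Y x' x Ht HY) as [A _].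
  assert (E1 : Hbar E hbar t x' Y = a) by (apply Hinv_spec; assumption).
  assert (E2 : Hbar E hbar s x Y = b) by (apply Hinv_spec; assumption).
  rewrite E1 in A.
  assert (B : Rabs (Hbar E hbar t x Y - Hbar E hbar s x Y) <= e).
  { unfold Hbar. eapply Rle_trans; [apply Eabsdiff; apply L_integrand; assumption|].
    rewrite <- (Ecst e). apply Emono.
    - apply LT_abs, LT_sub; apply L_integrand; assumption.
    - apply LT_c.
    - intro w. apply He. }
  rewrite E2 in B. set (P := Hbar E hbar t x Y) in *.
  assert (Rabs (a - P) <= Rabs (a - b) + Rabs (P - b)) by (unfold Rabs; repeat destruct Rcase_abs; lra).
  lra.
Qed.

End S.

Theorem proposition3p6
  (Om : Type) (T : R) (Lsp : R -> (Om -> R) -> Prop) (E : (Om -> R) -> R)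
  (l u : R -> R) (hbar : R -> Om -> R -> R) (C_h c_lo c_hi : R) :
  0 < T ->
  G_framework Om T Lsp E ->
  (* l, u bounded continuous on [0,T] with inf (u - l) > 0 *)
  cont_on_0T T l -> cont_on_0T T u ->
  bounded_on_0T T l -> bounded_on_0T T u ->
  (exists d, 0 < d /\ forall t, 0 <= t <= T -> d <= u t - l t) ->
  (* (t,y) |-> hbar(t,y) uniformly continuous, uniformly in omega *)
  (forall eps, 0 < eps -> exists delta, 0 < delta /\
     forall w t t' y y', 0 <= t <= T -> 0 <= t' <= T ->
       Rabs (t - t') < delta -> Rabs (y - y') < delta ->
       Rabs (hbar t w y - hbar t' w y') < eps) ->
  (* strictly increasing in y *)
  (forall t w y y', 0 <= t <= T -> y < y' -> hbar t w y < hbar t w y') ->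
  (* hbar(t,y) in L^1_G(Omega_T) *)
  (forall t y, 0 <= t <= T -> Lsp T (fun w => hbar t w y)) ->
  (* linear growth *)
  0 < C_h ->
  (forall t w y, 0 <= t <= T -> Rabs (hbar t w y) <= C_h * (1 + Rabs y)) ->
  (* bi-Lipschitz in y *)
  0 < c_lo -> c_lo <= c_hi ->
  (forall t w y y', 0 <= t <= T ->
     c_lo * Rabs (y - y') <= Rabs (hbar t w y - hbar t w y') /\
     Rabs (hbar t w y - hbar t w y') <= c_hi * Rabs (y - y')) ->
  (* (i) *)
  ((forall S : R -> Om -> R, C1G T Lsp E S ->
      cont_on_0T T (fun t => Lop E hbar l t (S t)) /\
      cont_on_0T T (fun t => Uop E hbar u t (S t))) /\
   cont_on_0T T (fun t => Lop E hbar l t (fun _ => 0)) /\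
   cont_on_0T T (fun t => Uop E hbar u t (fun _ => 0)) /\
   bounded_on_0T T (fun t => Lop E hbar l t (fun _ => 0)) /\
   bounded_on_0T T (fun t => Uop E hbar u t (fun _ => 0))) /\
  (* (ii) *)
  (forall t X X', 0 <= t <= T -> Lsp t X -> Lsp t X' ->
     Rabs (Lop E hbar l t X - Lop E hbar l t X')
       <= 2 * c_hi / c_lo * E (fun w => Rabs (X w - X' w)) /\
     Rabs (Uop E hbar u t X - Uop E hbar u t X')
       <= 2 * c_hi / c_lo * E (fun w => Rabs (X w - X' w))).
Proof.
  intros HT HG Hlc Huc Hlb Hub Hd Huch Hmono HL Ch Hgr Hclo Hchi Hbl.
  assert (HT' : 0 <= T) by lra.
  assert (Hhh : forall t, 0 <= t <= T -> hh T Lsp hbar c_lo c_hi t).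
  { intros t Ht. split; [|split].
    - intros w y y'. apply Hmono; exact Ht.
    - intros w y y'. apply Hbl; exact Ht.
    - intros y. apply HL; exact Ht. }
  assert (Hfilt : forall t X, 0 <= t <= T -> Lsp t X -> Lsp T X).
  { intros t X Ht HX. destruct HG as [Hf _]. apply (Hf t T X); lra || exact HX. }
  assert (cont_gen : forall (S : R -> Om -> R) (a : R -> R), C1G T Lsp E S -> cont_on_0T T a ->
            cont_on_0T T (fun t => Hbar_inv E hbar t (S t) (a t))).
  { intros S a [HS1 HS2] Ha t Ht eps Heps.
    assert (HS1' : forall v, 0 <= v <= T -> Lsp T (S v)) by (intros v Hv; exact (Hfilt v _ Hv (HS1 v Hv))).
    clear HS1; rename HS1' into HS1.
    set (e := c_lo * eps / 4).
    assert (He : 0 < e) by (unfold e; nra).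
    destruct (Huch e He) as [dh [Hdh Hh]].
    destruct (Ha t Ht e He) as [da [Hda Ha']].
    set (e' := c_lo * eps / (4 * c_hi)).
    assert (He' : 0 < e') by (unfold e'; apply Rdiv_lt_0_compat; nra).
    destruct (HS2 t Ht e' He') as [dS [HdS HS']].
    exists (Rmin dh (Rmin da dS)). split; [apply Rmin_pos; [lra| apply Rmin_pos; lra]|].
    intros s Hs Hst.
    assert (H1 : Rabs (s - t) < dh) by (eapply Rlt_le_trans; [exact Hst| apply Rmin_l]).
    assert (H2 : Rabs (s - t) < da) by (eapply Rlt_le_trans; [exact Hst| eapply Rle_trans; [apply Rmin_r| apply Rmin_l]]).
    assert (H3 : Rabs (s - t) < dS) by (eapply Rlt_le_trans; [exact Hst| eapply Rle_trans; [apply Rmin_r| apply Rmin_r]]).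
    assert (T1 := core_t T Lsp E HG HT' hbar c_lo c_hi Hclo Hchi s t (a s) (a t) (S s) e
                  (Hhh s Hs) (Hhh t Ht) (HS1 s Hs)
                  (fun w y => Rlt_le _ _ (Hh w s t y y Hs Ht H1
                      ltac:(rewrite Rminus_diag, Rabs_R0; exact Hdh)))).
    assert (T2 := core_ii T Lsp E HG HT' hbar c_lo c_hi Hclo Hchi t (a t) (S s) (S t)
                  (Hhh t Ht) (HS1 s Hs) (HS1 t Ht)).
    specialize (HS' s Hs H3). specialize (Ha' s Hs H2).
    cbv beta.
    set (A := Hbar_inv E hbar s (S s) (a s)) in *.
    set (B := Hbar_inv E hbar t (S s) (a t)) in *.
    set (C := Hbar_inv E hbar t (S t) (a t)) in *.
    assert (Htr : Rabs (A - C) <= Rabs (A - B) + Rabs (B - C)).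
    { replace (A - C) with ((A - B) + (B - C)) by ring. apply Rabs_triang. }
    assert (Hx : 2 * c_hi * E (fun w => Rabs (S s w - S t w)) < 2 * c_hi * e')
      by (apply Rmult_lt_compat_l; [lra| exact HS']).
    assert (Hx2 : 2 * c_hi * e' = c_lo * eps / 2) by (unfold e'; field; lra).
    apply Rmult_lt_reg_l with c_lo; [exact Hclo|].
    unfold e in *. nra. }
  assert (C0 : C1G T Lsp E (fun _ _ => 0)).
  { split.
    - intros v Hv. destruct HG as [_ [Hv' _]]. destruct (Hv' v Hv) as [Hc _]. apply Hc.
    - intros v Hv eps Heps. exists 1. split; [lra|]. intros w Hw Hwv.
      rewrite (Ecst T Lsp E HG). rewrite Rminus_diag, Rabs_R0. exact Heps. }
  assert (bnd : forall a : R -> R, bounded_on_0T T a ->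
            bounded_on_0T T (fun t => Hbar_inv E hbar t (fun _ => 0) (a t))).
  { intros a [M HM]. exists ((M + C_h) / c_lo). intros t Ht. cbv beta.
    assert (HY : Lsp T (fun _ : Om => 0)) by apply (LT_c T Lsp E HG HT').
    set (x := Hbar_inv E hbar t (fun _ => 0) (a t)).
    destruct (HB_lip T Lsp E HG HT' hbar c_lo c_hi Hclo t (fun _ => 0) x 0 (Hhh t Ht) HY) as [A _].
    assert (Hx : Hbar E hbar t x (fun _ => 0) = a t) by exact (Hinv_spec T Lsp E HG HT' hbar c_lo c_hi Hclo Hchi t (fun _ => 0) (a t) (Hhh t Ht) HY).
    rewrite Hx in A.
    assert (HB0 : Rabs (Hbar E hbar t 0 (fun _ => 0)) <= C_h).
    { unfold Hbar. assert (HB : Lsp T (fun w => hbar t w (0 + 0 - 0))) by (apply HL; exact Ht).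
      rewrite (Ecst T Lsp E HG 0).
      assert (Hp : forall w, Rabs (hbar t w (0 + 0 - 0)) <= C_h).
      { intro w. specialize (Hgr t w (0 + 0 - 0) Ht). replace (0 + 0 - 0) with 0 in * by ring.
        rewrite Rabs_R0 in Hgr. lra. }
      assert (U1 : E (fun w => hbar t w (0 + 0 - 0)) <= C_h).
      { rewrite <- (Ecst T Lsp E HG C_h). apply (Emono T Lsp E HG); [exact HB| apply (LT_c T Lsp E HG HT')|].
        intro w. specialize (Hp w). revert Hp. unfold Rabs; destruct Rcase_abs; lra. }
      assert (U2 : - C_h <= E (fun w => hbar t w (0 + 0 - 0))).
      { rewrite <- (Ecst T Lsp E HG (- C_h)). apply (Emono T Lsp E HG); [apply (LT_c T Lsp E HG HT')| exact HB|].
        intro w. specialize (Hp w). revert Hp. unfold Rabs; destruct Rcase_abs; lra. }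
      unfold Rabs; destruct Rcase_abs; lra. }
    specialize (HM t Ht). rewrite Rminus_0_r in A.
    assert (Hat : Rabs (a t - Hbar E hbar t 0 (fun _ => 0)) <= Rabs (a t) + Rabs (Hbar E hbar t 0 (fun _ => 0))).
    { unfold Rminus. eapply Rle_trans; [apply Rabs_triang| rewrite Rabs_Ropp; lra]. }
    apply Rmult_le_reg_l with c_lo; [exact Hclo|].
    replace (c_lo * ((M + C_h) / c_lo)) with (M + C_h) by (field; lra). lra. }
  assert (ii : forall (a : R -> R) t X X', 0 <= t <= T -> Lsp t X -> Lsp t X' ->
      Rabs (Hbar_inv E hbar t X (a t) - Hbar_inv E hbar t X' (a t))
        <= 2 * c_hi / c_lo * E (fun w => Rabs (X w - X' w))).
  { intros a t X X' Ht HX HX'.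
    pose proof (core_ii T Lsp E HG HT' hbar c_lo c_hi Hclo Hchi t (a t) X X' (Hhh t Ht)
                  (Hfilt t X Ht HX) (Hfilt t X' Ht HX')) as H.
    apply Rmult_le_reg_l with c_lo; [exact Hclo|].
    replace (c_lo * (2 * c_hi / c_lo * E (fun w => Rabs (X w - X' w))))
      with (2 * c_hi * E (fun w => Rabs (X w - X' w))) by (field; lra). exact H. }
  split; [split; [|split; [|split; [|split]]]|].
  - intros S HS. split; [exact (cont_gen S l HS Hlc)| exact (cont_gen S u HS Huc)].
  - exact (cont_gen (fun _ _ => 0) l C0 Hlc).
  - exact (cont_gen (fun _ _ => 0) u C0 Huc).
  - exact (bnd l Hlb).
  - exact (bnd u Hub).
  - intros t X X' Ht HX HX'. split; [exact (ii l t X X' Ht HX HX')| exact (ii u t X X' Ht HX HX')].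
Qed.
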